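(* Consider the following insertion-only procedure for maintaining a coloring of a set $S$ of objects, where $S$ is partitioned into sets $S_0,\ldots,S_\ell$, $\ell=\lceil\log n\rceil$, each in one of the states empty, full, or in migration, and where for each $i$ there are $\ell-i+1$ color sets $C(i,t)$, $0\le t\le \ell-i$, each of $\gamma_{\mathrm{um}}(2^i)$ colors. To insert an object $s$: (1) let $i$ be the smallest index with $S_i$ empty (if $i=\ell+1$ a new set is introduced and $\ell$ is redefined); (2) set $S_i:=\{s\}\cup S_0\cup\cdots\cup S_{i-1}$, mark $S_0,\ldots,S_{i-1}$ empty and $S_i$ in migration; (3) take an unused color set $C(i,t)$ and compute a unimax coloring of $S_i$ with it, whose colors are called final colors; only $s$ is given its final color now; (4) for each set $S_k$ in migration, recolor to its final color one object of $S_k$ whose current color differs from its final color and whose final color is maximal among such objects; if all objects of $S_k$ now have their final color, mark $S_k$ full. Then in step (3), at least one of the color sets $C(i,t)$ with $0\le t\le\ell-i$ is currently unused (i.e., not currently assigned as the color of any object of $S$).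
   Context: Initially $S$ is empty and all sets are empty. A unimax coloring of a set of objects (regions with respect to points, or points with respect to ranges) is a coloring by integers such that for every point (resp. range) $q$ related to at least one object, the maximum color among the objects related to $q$ is attained by exactly one of them. $\gamma_{\mathrm{um}}$ is a non-decreasing function such that every $m$ objects of the family admit a unimax coloring with $\gamma_{\mathrm{um}}(m)$ colors. *)

(* Defs.v *)
From mathcomp Require Import all_boot.
Set Implicit Arguments. Unset Strict Implicit. Unset Printing Implicit Defensive.

(* A unimax coloring f of the objects in A w.r.t. the relation [rel q o]
   ("point/range q is related to object o"): for every q related to at least
   one object of A, the maximum color among the objects of A related to q is
   attained by exactly one of them. *)
Definition unimax (O : eqType) (P : Type) (rel : P -> O -> bool)
    (A : seq O) (f : O -> nat) : Prop :=
  forall q, (exists o, o \in A /\ rel q o) ->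
    exists o, [/\ o \in A, rel q o,
      (forall o', o' \in A -> rel q o' -> f o' <= f o) &
      (forall o', o' \in A -> rel q o' -> f o' = f o -> o' = o)].

Definition gamma_um (O : eqType) (P : Type) (rel : P -> O -> bool)
    (gamma : nat -> nat) : Prop :=
  {homo gamma : m n / m <= n} /\
  forall A : seq O, uniq A ->
    exists f, unimax rel A f /\ forall o, o \in A -> f o < gamma (size A).

Inductive status := SEmpty | SFull | SMigr.

(* A color is a triple (i, t, c): the c-th color (c < gamma (2^i)) of the
   color set C(i,t).  Colors of different color sets are different. *)
Definition color := (nat * nat * nat)%type.

Record state (O : Type) := mkState {
  lvl  : nat;
  part : nat -> seq O;
  stat : nat -> status;
  cur  : O -> color;
  fin  : O -> color
}.

Definition init_state (O : Type) (l0 : nat) : state O :=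
  mkState l0 (fun _ => [::]) (fun _ => SEmpty)
          (fun _ => (0, 0, 0)) (fun _ => (0, 0, 0)).

Definition inS (O : eqType) (st : state O) (o : O) : Prop :=
  exists k, o \in part st k.

Definition used (O : eqType) (st : state O) (i t : nat) : Prop :=
  exists o, inS st o /\ (cur st o).1.1 = i /\ (cur st o).1.2 = t.

Definition firstEmpty (O : Type) (st : state O) (i : nat) : Prop :=
  stat st i = SEmpty /\ forall j, j < i -> stat st j <> SEmpty.

(* One insertion of the object s, transforming st into st' (nondeterministic
   in the choice of t, of the unimax coloring g, and of the recolored
   objects r k among ties). *)
Definition insert_step (O : eqType) (P : Type) (rel : P -> O -> bool)
    (gamma : nat -> nat) (st : state O) (s : O) (st' : state O) : Prop :=
  ~ inS st s /\
  exists i, firstEmpty st i /\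
  let l1 := maxn (lvl st) i in
  let Si := s :: flatten [seq part st j | j <- iota 0 i] in
  let part1 := fun k => if k < i then [::] else if k == i then Si else part st k in
  let stat1 := fun k => if k < i then SEmpty else if k == i then SMigr else stat st k in
  exists (t : nat) (g : O -> nat) (r : nat -> option O),
  let fin1 := fun o => if o \in Si then (i, t, g o) else fin st o in
  let cur1 := fun o => if o == s then (i, t, g s) else cur st o in
  t <= l1 - i /\ ~ used st i t /\
      unimax rel Si g /\ (forall o, o \in Si -> g o < gamma (2 ^ i)) /\
      (forall k, stat1 k = SMigr ->
         (exists o, o \in part1 k /\ cur1 o <> fin1 o) ->
         exists o, [/\ r k = Some o, o \in part1 k, cur1 o <> fin1 o &
           forall o', o' \in part1 k -> cur1 o' <> fin1 o' ->
             (fin1 o').2 <= (fin1 o).2]) /\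
      (forall k, (stat1 k <> SMigr \/ forall o, o \in part1 k -> cur1 o = fin1 o) ->
         r k = None) /\
      (lvl st' = l1 /\
          (forall k, part st' k = part1 k) /\
          (forall o, fin st' o = fin1 o) /\
          (forall o, (exists k, r k = Some o) -> cur st' o = fin1 o) /\
          (forall o, ~ (exists k, r k = Some o) -> cur st' o = cur1 o) /\
          (forall k,
             ((stat1 k = SMigr /\ forall o, o \in part1 k -> cur st' o = fin1 o) ->
                stat st' k = SFull) /\
             (~ (stat1 k = SMigr /\ forall o, o \in part1 k -> cur st' o = fin1 o) ->
                stat st' k = stat1 k))).

Inductive reachable (O : eqType) (P : Type) (rel : P -> O -> bool)
    (gamma : nat -> nat) (l0 : nat) : state O -> Prop :=
  | reach_init : reachable rel gamma l0 (init_state O l0)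
  | reach_step st s st' : reachable rel gamma l0 st ->
      insert_step rel gamma st s st' -> reachable rel gamma l0 st'.

(* Main.v *)
Require Import Defs.
From mathcomp Require Import all_boot.
From mathcomp Require Import zify.
From Stdlib Require Import Classical.
Set Implicit Arguments. Unset Strict Implicit. Unset Printing Implicit Defensive.

Definition isE (x : status) := if x is SEmpty then true else false.

Fixpoint E (f : nat -> status) (k : nat) : nat :=
  if k is k'.+1 then E f k' + (if isE (f k') then 2 ^ k' else 0) else 0.

Lemma E_allne f k : (forall j, j < k -> f j <> SEmpty) -> E f k = 0.
Proof.
elim: k => //= k IH H; rewrite IH => [|j jk]; last by apply: H; lia.
by case E1: (f k) (H k (ltnSn k)).
Qed.

Lemma E_alle f k : (forall j, j < k -> f j = SEmpty) -> E f k + 1 = 2 ^ k.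
Proof.
elim: k => //= k IH H; rewrite (H k (ltnSn k)) /=.
have := IH (fun j jk => H j (ltnW jk)); rewrite expnS; lia.
Qed.

Lemma E_step f g i : f i = SEmpty -> (forall j, j < i -> f j <> SEmpty) ->
  (forall j, j < i -> g j = SEmpty) -> g i <> SEmpty ->
  (forall j, i < j -> isE (g j) = isE (f j)) ->
  forall k, i < k -> E g k + 1 = E f k.
Proof.
move=> fi fb gb gi gf; elim=> // k IH; rewrite ltnS leq_eqVlt => /orP [/eqP <-|ik].
  rewrite /= fi (E_allne fb); case Eg: (g i) gi => //= _; rewrite addn0 E_alle //.
by rewrite /= -IH // gf //; lia.
Qed.

Lemma size_flat (T : Type) (f : nat -> seq T) k :
  (forall j, j < k -> size (f j) <= 2 ^ j) ->
  size (flatten [seq f j | j <- iota 0 k]) + 1 <= 2 ^ k.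
Proof.
elim: k => [|k IH H] //.
rewrite -[k.+1]addn1 iotaD map_cat flatten_cat size_cat /= cats0 add0n.
rewrite [k + 1]addn1 expnS.
have := IH (fun j jk => H j (ltnW jk)); have := H k (ltnSn k); lia.
Qed.

Lemma count_lt (T : eqType) (p q : pred T) s x : x \in s -> p x -> ~~ q x ->
  (forall y, y \in s -> q y -> p y) -> count q s < count p s.
Proof.
elim: s => //= y s IH; rewrite in_cons => /orP [/eqP ->|xs] px qx H.
  rewrite px (negbTE qx) /= add0n add1n ltnS.
  have : count (predI q (mem s)) s <= count p s.
    by apply: sub_count => z /= /andP [qz zs]; apply: H => //; rewrite in_cons zs orbT.
  by rewrite (@eq_in_count _ _ q) // => z zs /=; rewrite zs andbT.
have := IH xs px qx (fun z zs => H z (mem_behead (s:=y :: s) zs)).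
have : q y <= p y by case qy: (q y) => //=; rewrite H // in_cons eqxx.
lia.
Qed.

Definition mm (O : eqType) (st : state O) k :=
  count (fun o => cur st o != fin st o) (part st k).

Record Inv (O : eqType) (st : state O) : Prop := {
 i_disj : forall j k o, o \in part st j -> o \in part st k -> j = k;
 i_empty : forall k, stat st k = SEmpty -> part st k = [::];
 i_lvl : forall k, lvl st < k -> part st k = [::];
 i_size : forall k, size (part st k) <= 2 ^ k;
 i_FT : exists (F : nat -> nat) (T : nat -> nat -> nat),
   [/\ forall k o, o \in part st k -> (fin st o).1 = (k, F k),
       forall k o, o \in part st k -> (cur st o).1.2 = T k (cur st o).1.1
     & forall k, T k k = F k];
 i_full : forall k, stat st k = SFull -> forall o, o \in part st k -> cur st o = fin st o;
 i_migr : forall k, stat st k = SMigr -> 0 < mm st k <= E (stat st) k }.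

Lemma below_full (O : eqType) (st : state O) i j : Inv st -> firstEmpty st i -> j < i ->
  stat st j = SFull.
Proof.
move=> I [_ Hb] ji; case Ej: (stat st j) => //.
  by case: (Hb j ji).
have := i_migr I Ej; rewrite (@E_allne _ j); first lia.
move=> j' j'j; apply: Hb; lia.
Qed.

Lemma inv_step (O : eqType) (P : Type) (rel : P -> O -> bool) gamma (st st' : state O) s : Inv st -> insert_step rel gamma st s st' -> Inv st'.
Proof.
move=> I [Hs [i [Hfe H]]].
case: H => t [g [r [Ht [Hu [Hg [Hgb [Hr [Hr0 [Hl [Hp [Hf [Hc1 [Hc2 Hst]]]]]]]]]]]]].
set Si := s :: flatten _ in Hg Hgb Hr Hr0 Hp Hf Hc1 Hc2 Hst.
pose stat1 := fun k => if k < i then SEmpty else if k == i then SMigr else stat st k.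
have [F [T [HF HT HTF]]] := i_FT I.
have Hfull j : j < i -> stat st j = SFull := below_full I Hfe.
have memSi o : o \in Si -> o = s \/ exists2 j, j < i & o \in part st j.
  rewrite in_cons => /orP [/eqP->|/flatten_mapP [j]]; first by left.
  by rewrite mem_iota => /andP [_ ji] oj; right; exists j.
have sSi : s \in Si by rewrite in_cons eqxx.
have notSi k o : i < k -> o \in part st k -> o \notin Si /\ o != s.
  move=> ik ok; have os : o != s by apply/eqP => es; apply: Hs; exists k; rewrite -es.
  split => //; apply/negP => /memSi [es|[j ji oj]]; first by rewrite es eqxx in os.
  have := i_disj I oj ok; lia.
have Hpk k : i < k -> part st' k = part st k.
  move=> ik; rewrite Hp; have -> : (k < i) = false by lia.
  by have -> : (k == i) = false by lia.
have Hpl k : k < i -> part st' k = [::] by move=> ki; rewrite Hp ki.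
have Hpi : part st' i = Si by rewrite Hp ltnn eqxx.
have S1k k : i < k -> stat1 k = stat st k.
  move=> ik; rewrite /stat1; have -> : (k < i) = false by lia.
  by have -> : (k == i) = false by lia.
have S1l k : k < i -> stat1 k = SEmpty by move=> ki; rewrite /stat1 ki.
have S1i : stat1 i = SMigr by rewrite /stat1 ltnn eqxx.
have Hfk k o : i < k -> o \in part st k -> fin st' o = fin st o.
  by move=> ik ok; rewrite Hf (negbTE (notSi k o ik ok).1).
have Hck k o : i < k -> o \in part st k -> cur st' o = fin st o \/ cur st' o = cur st o.
  move=> ik ok; have [nS os] := notSi k o ik ok.
  case: (classic (exists k, r k = Some o)) => Hx.
    by left; rewrite Hc1 // (negbTE nS).
  by right; rewrite Hc2 // (negbTE os).
have Hst2 k : (stat1 k = SMigr /\ (forall o, o \in part st' k -> cur st' o = fin st' o)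
      /\ stat st' k = SFull) \/
    (~ (stat1 k = SMigr /\ (forall o, o \in part st' k -> cur st' o = fin st' o))
      /\ stat st' k = stat1 k).
  case: (Hst k) => H1 H2.
  case: (classic (stat1 k = SMigr /\ forall o, o \in part st' k -> cur st' o = fin st' o))
    => [[c1 c2]|nc].
    left; split => //; split => //; apply: H1; split => // o.
    by rewrite -(Hp k) -(Hf o); exact: c2.
  right; split => //; apply: H2 => -[c1 c2]; apply: nc; split => // o.
  by rewrite (Hp k) (Hf o); exact: c2.
have Sl k : k < i -> stat st' k = SEmpty.
  by move=> ki; case: (Hst2 k) => [[]|[_ ->]]; rewrite S1l.
have Si' : stat st' i <> SEmpty.
  by case: (Hst2 i) => [[_ [_ ->]]|[_ ->]] //; rewrite S1i.
have Sk k : i < k -> isE (stat st' k) = isE (stat st k).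
  move=> ik; case: (Hst2 k) => [[]|[_ ->]]; rewrite S1k // => ->.
  by case=> _ ->.
have curs : cur st' s = fin st' s.
  rewrite Hf sSi; case: (classic (exists k, r k = Some s)) => Hx.
    by rewrite Hc1 // sSi.
  by rewrite Hc2 // eqxx.
have Hfi o : o \in Si -> fin st' o = (i, t, g o) by move=> oS; rewrite Hf oS.
split.
- move=> j k o; case: (ltngtP j i) => [ji|ij|->]; first by rewrite Hpl.
  + rewrite Hpk //; case: (ltngtP k i) => [ki|ik|->]; first by rewrite Hpl.
    * by rewrite Hpk //; apply: (i_disj I).
    * by rewrite Hpi => oj oS; have := (notSi j o ij oj).1; rewrite oS.
  + rewrite Hpi; case: (ltngtP k i) => [ki|ik|->] //; first by rewrite Hpl.
    by rewrite Hpk // => oS ok; have := (notSi k o ik ok).1; rewrite oS.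
- move=> k; case: (ltngtP k i) => [ki|ik|->]; first by rewrite Hpl.
  + rewrite Hpk //; case: (Hst2 k) => [[_ [_ ->]]|[_ ->]] //.
    by rewrite S1k //; apply: (i_empty I).
  + by move/Si'.
- move=> k; rewrite Hl => lk; rewrite Hpk; last by lia.
  by apply: (i_lvl I); lia.
- move=> k; case: (ltngtP k i) => [ki|ik|->]; first by rewrite Hpl.
  + by rewrite Hpk //; apply: (i_size I).
  + rewrite Hpi /Si /= -addn1; apply: size_flat => j _; exact: (i_size I).
- exists (fun k => if k == i then t else F k).
  exists (fun k j => if k == i then (if j == i then t else F j)
              else if j == k then F k else T k j).
  split.
  + move=> k o; case: (ltngtP k i) => [ki|ik|->]; first by rewrite Hpl.
    * rewrite Hpk // => ok; rewrite (Hfk k o ik ok) (HF _ _ ok).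
      by [].
    * by rewrite Hpi => oS; rewrite Hfi.
  + move=> k o; case: (ltngtP k i) => [ki|ik|->]; first by rewrite Hpl.
    * rewrite Hpk // => ok.
      case: (Hck k o ik ok) => ->; first by rewrite (HF _ _ ok) /= eqxx.
      rewrite (HT _ _ ok); case: eqP => // ->; by rewrite HTF.
    * rewrite Hpi => oS.
      case: (classic (exists k, r k = Some o)) => Hx.
        by rewrite Hc1 // oS /= eqxx.
      rewrite Hc2 //; case: eqP => [_|/eqP os]; first by rewrite /= eqxx.
      case: (memSi o oS) => [es|[j ji oj]]; first by rewrite es eqxx in os.
      rewrite (i_full I (Hfull j ji) oj) (HF _ _ oj) /=.
      by have -> : (j == i) = false by lia.
  + by move=> k; rewrite eqxx; case: eqP.
- move=> k Hk o; case: (Hst2 k) => [[_ [c2 _]]|[_ e]]; first exact: c2.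
  move: o; case: (ltngtP k i) => [ki|ik|ki].
  + by rewrite e S1l in Hk.
  + rewrite Hpk // => o ok; rewrite e S1k // in Hk.
    rewrite (Hfk k o ik ok); case: (Hck k o ik ok) => -> //.
    exact: i_full I k Hk o ok.
  + by subst k; rewrite e S1i in Hk.
- move=> k Hk; case: (Hst2 k) => [[_ [_ e]]|[nc e]]; first by rewrite e in Hk.
  have nm : ~ (forall o, o \in part st' k -> cur st' o = fin st' o).
    by move=> c; apply: nc; split => //; rewrite -e.
  have pos : 0 < mm st' k.
    rewrite /mm -has_count; apply/hasP.
    case: (boolP (has (fun o => cur st' o != fin st' o) (part st' k))) => [/hasP //|].
    move=> /hasPn Hn; exfalso; apply: nm => o /Hn; by rewrite negbK => /eqP.
  rewrite pos /=.
  have Estep := E_step (f := stat st) (g := stat st') (i := i) (proj1 Hfe) (proj2 Hfe) Sl Si' Sk.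
  case: (ltngtP k i) => [ki|ik|ki].
  + by rewrite e S1l in Hk.
  + rewrite e S1k // in Hk.
    have := i_migr I Hk; rewrite -(Estep k ik) => /andP [p0 pE].
    have : has (fun o => cur st o != fin st o) (part st k) by rewrite has_count.
    move=> /hasP [o0 o0k o0m].
    have Hr' := Hr k (etrans (S1k k ik) Hk).
    have [|o [ro ok om _]] := Hr'.
      have ki1 : (k < i) = false by lia.
      have ki2 : (k == i) = false by lia.
      exists o0; split; first by rewrite ki1 ki2.
      have [nS os] := notSi k o0 ik o0k; rewrite (negbTE nS) (negbTE os).
      exact/eqP.
    move: ok om; rewrite -(Hp k) Hpk // => ok.
    have [nS os] := notSi k o ik ok; rewrite (negbTE nS) (negbTE os) => om.
    have : mm st' k < mm st k.
      rewrite /mm Hpk //; apply: (@count_lt _ _ _ _ o) => //.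
      * exact/eqP.
      * rewrite negbK (Hfk k o ik ok) Hc1; last by exists k.
        by rewrite (negbTE nS).
      * move=> y yk; rewrite (Hfk k y ik yk).
        by case: (Hck k y ik yk) => ->; rewrite ?eqxx.
    lia.
  + subst k; rewrite Hpi in nm *.
    have := E_alle (f := stat st') (k := i) Sl.
    have := size_flat (f := part st) (k := i) (fun j _ => i_size I j).
    rewrite /mm Hpi /Si /= curs eqxx /= add0n.
    have := count_size (fun o => cur st' o != fin st' o) (flatten [seq part st j | j <- iota 0 i]).
    lia.
Qed.

Lemma inv_init (O : eqType) l0 : Inv (init_state O l0).
Proof.
split => //=.
by exists (fun _ => 0), (fun _ _ => 0).
Qed.

Lemma avail (L : seq nat) n : size L < n -> exists t, t < n /\ t \notin L.
Proof.
move=> Ln; case: (boolP (all (mem L) (iota 0 n))) => [/allP H|/allPn [t]].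
  exfalso; have := uniq_leq_size (iota_uniq 0 n) H; by rewrite size_iota leqNgt Ln.
by move=> tI tL; rewrite mem_iota in tI; exists t; split => //; lia.
Qed.

Theorem mainTheorem9 (O : eqType) (P : Type) (rel : P -> O -> bool)
    (gamma : nat -> nat) (l0 : nat) (st : state O) :
  gamma_um rel gamma ->
  reachable rel gamma l0 st ->
  forall i, firstEmpty st i ->
  exists t, t <= maxn (lvl st) i - i /\ ~ used st i t.
Proof.
move=> _ R.
have I : Inv st.
  elim: R => [|st0 s st1 _ IH Hs]; first exact: inv_init.
  exact: inv_step IH Hs.
move=> i Hfe.
have [F [T [HF HT HTF]]] := i_FT I.
set l1 := maxn (lvl st) i.
have [t [tn tL]] : exists t, t < (l1 - i).+1 /\ t \notin [seq T k i | k <- iota i.+1 (l1 - i)].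
  by apply: avail; rewrite size_map size_iota.
exists t; split; first lia.
move=> [o [[k ok] [lev tt]]].
case: (ltngtP k i) => [ki|ik|ki].
- have := HF _ _ ok; rewrite -(i_full I (below_full I Hfe ki) ok) => e.
  by move: lev; rewrite e /=; lia.
- case: (leqP k (lvl st)) => kl; last by rewrite (i_lvl I kl) in ok.
  move/negP: tL; apply; apply/mapP; exists k.
    rewrite mem_iota; lia.
  by rewrite -tt (HT _ _ ok) lev.
- by subst k; rewrite (i_empty I (proj1 Hfe)) in ok.
Qed.
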